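(* Let $0<3x_0<L$, $\mu>0$, and $\mu_0=-\frac{x_0}{L+x_0}+2\sqrt{\frac{x_0}{L+x_0}}$. Consider $$(r\ddot u)''+\mu(q\dot u)'+pu=0\quad\text{on }(0,2L).\qquad(\ast)$$ (i) If $\mu<\mu_0$, every solution of $(\ast)$ is a linear combination of $\cos\alpha\theta\sinh\beta\theta$, $\sin\alpha\theta\cosh\beta\theta$, $\sin\alpha\theta\sinh\beta\theta$, $\cos\alpha\theta\cosh\beta\theta$, where $\alpha=\frac12\sqrt{\mu+\frac{x_0}{L+x_0}+2\sqrt{\frac{x_0}{L+x_0}}}$ and $\beta=\frac12\sqrt{-\mu-\frac{x_0}{L+x_0}+2\sqrt{\frac{x_0}{L+x_0}}}$. (ii) If $\mu=\mu_0$, every solution of $(\ast)$ is a linear combination of $\sin\alpha\theta$, $\cos\alpha\theta$, $\theta\sin\alpha\theta$, $\theta\cos\alpha\theta$ (with $\alpha$ as in (i)). (iii) If $\mu>\mu_0$, every solution of $(\ast)$ is a linear combination of $\sin(\alpha-\gamma)\theta$, $\sin(\alpha+\gamma)\theta$, $\cos(\alpha-\gamma)\theta$, $\cos(\alpha+\gamma)\theta$, with $\alpha$ as in (i) and $\gamma=\frac12\sqrt{\mu+\frac{x_0}{L+x_0}-2\sqrt{\frac{x_0}{L+x_0}}}$. In each case the four functions are linearly independent.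
   Context: $\sigma=\pi\sqrt{x_0/(L+x_0)}$, $k=L/\sin\sigma$, $\lambda=\frac{2L}{L+x_0}$, $H(s)=\frac{\pi}{\sigma\sqrt{k^2-(s-L)^2}}$ for $s\in[0,2L]$ (the curvature of the critical curve $\gamma(x_0,L)$), $\theta(s)=\int_0^sH(l)\,dl=\pi\big(1+\frac1\sigma\arcsin\frac{s-L}{k}\big)$, so $\theta(0)=0$, $\theta(2L)=2\pi$. Set $r=2/H^3$, $q=2/H$, $p=(2-\lambda)H$. Derivatives ($'$ and dots) are with respect to $s$; solutions are classical ($C^4$) solutions on $(0,2L)$. *)

(* Defs.v *)
From Stdlib Require Import Reals Lra.
From Coquelicot Require Import Coquelicot.
Open Scope R_scope.

Section Defs.
Variables x0 L : R.

Definition sigma0 : R := PI * sqrt (x0 / (L + x0)).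
Definition kk : R := L / sin sigma0.
Definition lambda0 : R := 2 * L / (L + x0).
(* curvature of the critical curve gamma(x0,L) *)
Definition Hc (s : R) : R := PI / (sigma0 * sqrt (kk ^ 2 - (s - L) ^ 2)).
Definition theta (s : R) : R := PI * (1 + / sigma0 * asin ((s - L) / kk)).
Definition rr (s : R) : R := 2 / (Hc s ^ 3).
Definition qq (s : R) : R := 2 / Hc s.
Definition pp (s : R) : R := (2 - lambda0) * Hc s.

Definition in_dom (s : R) : Prop := 0 < s < 2 * L.

Definition C4_on (u : R -> R) : Prop :=
  forall s, in_dom s ->
    (forall n, (n <= 4)%nat -> ex_derive_n u n s) /\
    continuous (Derive_n u 4) s.

Definition is_solution (mu : R) (u : R -> R) : Prop :=
  C4_on u /\
  forall s, in_dom s ->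
    Derive (fun t => Derive (fun t' => rr t' * Derive_n u 2 t') t) s
    + mu * Derive (fun t => qq t * Derive u t) s
    + pp s * u s = 0.

Definition basis_of_solutions (mu : R) (f1 f2 f3 f4 : R -> R) : Prop :=
  (forall u, is_solution mu u ->
     exists c1 c2 c3 c4 : R, forall s, in_dom s ->
       u s = c1 * f1 (theta s) + c2 * f2 (theta s) + c3 * f3 (theta s) + c4 * f4 (theta s))
  /\
  (forall c1 c2 c3 c4 : R,
     (forall s, in_dom s ->
        c1 * f1 (theta s) + c2 * f2 (theta s) + c3 * f3 (theta s) + c4 * f4 (theta s) = 0) ->
     c1 = 0 /\ c2 = 0 /\ c3 = 0 /\ c4 = 0).

Definition mu0 : R := - (x0 / (L + x0)) + 2 * sqrt (x0 / (L + x0)).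
Definition alpha (mu : R) : R :=
  / 2 * sqrt (mu + x0 / (L + x0) + 2 * sqrt (x0 / (L + x0))).
Definition beta (mu : R) : R :=
  / 2 * sqrt (- mu - x0 / (L + x0) + 2 * sqrt (x0 / (L + x0))).
Definition gamma (mu : R) : R :=
  / 2 * sqrt (mu + x0 / (L + x0) - 2 * sqrt (x0 / (L + x0))).

End Defs.

(* Main.v *)
Require Import Defs.
From Stdlib Require Import Reals Lra Lia.
From Coquelicot Require Import Coquelicot.
Open Scope R_scope.

Lemma const_on (f : R -> R) lo hi :
  (forall t, lo < t < hi -> is_derive f t 0) ->
  forall t1 t2, lo < t1 < hi -> lo < t2 < hi -> f t1 = f t2.
Proof.
intros Hd t1 t2 H1 H2.
destruct (MVT_gen f t1 t2 (fun _ => 0)) as [c [_ Hc]].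
- intros x Hx. apply Hd. unfold Rmin, Rmax in Hx.
  destruct (Rle_dec t1 t2); lra.
- intros x Hx. apply continuity_pt_filterlim.
  apply (ex_derive_continuous f). exists 0. apply Hd.
  unfold Rmin, Rmax in Hx. destruct (Rle_dec t1 t2); lra.
- lra.
Qed.

Lemma is_derive_eq (f : R -> R) (x l l' : R) : is_derive f x l -> l = l' -> is_derive f x l'.
Proof. intros H ->; exact H. Qed.

Lemma deriv_zero (g : R -> R) lo hi t d :
  (forall s, lo < s < hi -> g s = 0) -> lo < t < hi -> is_derive g t d -> d = 0.
Proof.
intros Hg Ht Hd.
assert (H0 : is_derive (fun _ => 0) t d).
{ apply (is_derive_ext_loc g). 2: exact Hd.
  apply (locally_open (fun s => lo < s /\ s < hi)).
  - apply open_and; [apply open_gt | apply open_lt].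
  - intros s Hs. apply Hg; lra.
  - lra. }
apply is_derive_unique in H0. rewrite <- H0. apply Derive_const.
Qed.

Lemma D_plus (f g : R -> R) (t a b : R) : is_derive f t a -> is_derive g t b ->
  is_derive (fun x => f x + g x) t (a + b).
Proof. intros; apply (is_derive_plus f g); auto. Qed.
Lemma D_minus (f g : R -> R) (t a b : R) : is_derive f t a -> is_derive g t b ->
  is_derive (fun x => f x - g x) t (a - b).
Proof. intros; apply (is_derive_minus f g); auto. Qed.
Lemma D_mult (f g : R -> R) (t a b : R) : is_derive f t a -> is_derive g t b ->
  is_derive (fun x => f x * g x) t (a * g t + f t * b).
Proof. intros; apply (is_derive_mult f g); auto. intros; apply Rmult_comm. Qed.
Lemma D_scal (f : R -> R) (k t a : R) : is_derive f t a ->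
  is_derive (fun x => k * f x) t (k * a).
Proof. intros; apply (is_derive_scal f); auto. Qed.
Lemma D_cos (a t : R) : is_derive (fun x => cos (a * x)) t (- a * sin (a * t)).
Proof. auto_derive; auto; ring. Qed.
Lemma D_sin (a t : R) : is_derive (fun x => sin (a * x)) t (a * cos (a * t)).
Proof. auto_derive; auto; ring. Qed.
Lemma D_exp (a t : R) : is_derive (fun x => exp (a * x)) t (a * exp (a * t)).
Proof. auto_derive; auto; ring. Qed.
Lemma D_const (k t : R) : is_derive (fun _ : R => k) t 0.
Proof. auto_derive; auto. Qed.
Lemma D_id (t : R) : is_derive (fun x => x) t 1.
Proof. auto_derive; auto. Qed.

Lemma harmonic (y y1 y2 : R -> R) a lo hi : a <> 0 -> lo < hi ->
  (forall t, lo < t < hi -> is_derive y t (y1 t) /\ is_derive y1 t (y2 t) /\ y2 t = -(a^2) * y t) ->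
  exists P Q, forall t, lo < t < hi -> y t = P * cos (a * t) + Q * sin (a * t).
Proof.
intros Ha Hlh H.
set (m := (lo + hi) / 2).
assert (Hm : lo < m < hi) by (unfold m; lra).
exists (y m * cos (a * m) - y1 m * sin (a * m) / a).
exists (y m * sin (a * m) + y1 m * cos (a * m) / a).
intros t Ht.
assert (E1 : (fun t => y t * cos (a * t) - y1 t * sin (a * t) / a) m = (fun t => y t * cos (a * t) - y1 t * sin (a * t) / a) t).
{ apply (const_on (fun t => y t * cos (a * t) - y1 t * sin (a * t) / a) lo hi); auto.
  intros s Hs. destruct (H s Hs) as [H1 [H2 H3]].
  eapply is_derive_eq.
  + apply D_minus; [apply D_mult; [exact H1 | apply D_cos]|].
    unfold Rdiv. apply D_mult; [apply D_mult; [exact H2 | apply D_sin] | apply D_const].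
  + rewrite H3. field. auto. }
assert (E2 : (fun t => y t * sin (a * t) + y1 t * cos (a * t) / a) m = (fun t => y t * sin (a * t) + y1 t * cos (a * t) / a) t).
{ apply (const_on (fun t => y t * sin (a * t) + y1 t * cos (a * t) / a) lo hi); auto.
  intros s Hs. destruct (H s Hs) as [H1 [H2 H3]].
  eapply is_derive_eq.
  + apply D_plus; [apply D_mult; [exact H1 | apply D_sin]|].
    unfold Rdiv. apply D_mult; [apply D_mult; [exact H2 | apply D_cos] | apply D_const].
  + rewrite H3. field. auto. }
cbv beta in E1, E2. rewrite E1, E2.
pose proof (sin2_cos2 (a * t)) as HS. unfold Rsqr in HS.
transitivity (y t * (sin (a * t) * sin (a * t) + cos (a * t) * cos (a * t))).
- rewrite HS; ring.
- field; auto.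
Qed.

Definition TC (a P Q t : R) : R := P * cos (a * t) + Q * sin (a * t).
Definition EC (b a P Q t : R) : R := exp (b * t) * TC a P Q t.

Lemma D_TC (a P Q t : R) : is_derive (TC a P Q) t (TC a (a * Q) (- (a * P)) t).
Proof.
unfold TC. eapply is_derive_eq.
- apply D_plus; apply D_scal; [apply D_cos | apply D_sin].
- ring.
Qed.

Lemma D_EC (b a P Q t : R) : is_derive (EC b a P Q) t (EC b a (b * P + a * Q) (b * Q - a * P) t).
Proof.
unfold EC. eapply is_derive_eq.
- apply D_mult; [apply D_exp | apply D_TC].
- unfold TC; ring.
Qed.

Lemma D_tTC (a P Q t : R) : is_derive (fun x => x * TC a P Q x) t (TC a P Q t + t * TC a (a * Q) (- (a * P)) t).
Proof.
eapply is_derive_eq.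
- apply D_mult; [apply D_id | apply D_TC].
- simpl; ring.
Qed.

Lemma zero_chain (g g1 : R -> R) lo hi :
  (forall t, lo < t < hi -> g t = 0) -> (forall t, lo < t < hi -> is_derive g t (g1 t)) ->
  forall t, lo < t < hi -> g1 t = 0.
Proof. intros H0 H1 t Ht. apply (deriv_zero g lo hi t); auto. Qed.

Lemma TC_zero a P Q lo hi : a <> 0 -> lo < hi ->
  (forall t, lo < t < hi -> TC a P Q t = 0) -> P = 0 /\ Q = 0.
Proof.
intros Ha Hlh H.
set (m := (lo + hi) / 2).
assert (Hm : lo < m < hi) by (unfold m; lra).
assert (H1 := zero_chain (TC a P Q) _ lo hi H (fun t _ => D_TC a P Q t) m Hm).
assert (H0 := H m Hm).
unfold TC in H0, H1.
pose proof (sin2_cos2 (a * m)) as HS. unfold Rsqr in HS.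
set (c := cos (a * m)) in *. set (s := sin (a * m)) in *.
assert (E1 : Q * c - P * s = 0).
{ apply (Rmult_eq_reg_l a). 2: auto. rewrite Rmult_0_r. rewrite <- H1. ring. }
split.
- transitivity (c * (P * c + Q * s) - s * (Q * c - P * s)).
  + transitivity (P * (s * s + c * c)); [rewrite HS; ring | ring].
  + rewrite H0, E1; ring.
- transitivity (s * (P * c + Q * s) + c * (Q * c - P * s)).
  + transitivity (Q * (s * s + c * c)); [rewrite HS; ring | ring].
  + rewrite H0, E1; ring.
Qed.

Lemma harmonic_TC (y y1 y2 : R -> R) a lo hi : a <> 0 -> lo < hi ->
  (forall t, lo < t < hi -> is_derive y t (y1 t) /\ is_derive y1 t (y2 t) /\ y2 t = -(a^2) * y t) ->
  exists P Q, forall t, lo < t < hi -> y t = TC a P Q t.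
Proof. intros Ha Hlh H. destruct (harmonic y y1 y2 a lo hi Ha Hlh H) as [P [Q HPQ]].
exists P, Q. exact HPQ. Qed.

Lemma damped (y y1 y2 : R -> R) a be lo hi : a <> 0 -> lo < hi ->
  (forall t, lo < t < hi -> is_derive y t (y1 t) /\ is_derive y1 t (y2 t) /\
     y2 t = - 2 * be * y1 t - (a^2 + be^2) * y t) ->
  exists P Q, forall t, lo < t < hi -> y t = EC (- be) a P Q t.
Proof.
intros Ha Hlh H.
destruct (harmonic_TC (fun t => exp (be * t) * y t) (fun t => exp (be * t) * (y1 t + be * y t))
   (fun t => exp (be * t) * (y2 t + 2 * be * y1 t + be ^ 2 * y t)) a lo hi Ha Hlh) as [P [Q HPQ]].
{ intros t Ht. destruct (H t Ht) as [H1 [H2 H3]]. split; [|split].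
  - eapply is_derive_eq. apply D_mult; [apply D_exp | exact H1]. cbv beta; ring.
  - eapply is_derive_eq. apply D_mult; [apply D_exp | apply D_plus; [exact H2 | apply D_scal; exact H1]]. cbv beta; ring.
  - rewrite H3. ring. }
exists P, Q. intros t Ht. unfold EC. rewrite <- HPQ by auto.
rewrite <- Rmult_assoc, <- exp_plus.
replace (- be * t + be * t) with 0 by ring. rewrite exp_0. ring.
Qed.

Definition chain4 (lo hi m c : R) (w0 w1 w2 w3 w4 : R -> R) : Prop :=
  forall t, lo < t < hi -> is_derive w0 t (w1 t) /\ is_derive w1 t (w2 t) /\
    is_derive w2 t (w3 t) /\ is_derive w3 t (w4 t) /\ w4 t = - m * w2 t - c * w0 t.

Lemma rep3 lo hi a1 a2 w0 w1 w2 w3 w4 : 0 < a1 -> a1 < a2 -> lo < hi ->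
  chain4 lo hi (a1^2 + a2^2) (a1^2 * a2^2) w0 w1 w2 w3 w4 ->
  exists c1 c2 c3 c4, forall t, lo < t < hi ->
    w0 t = c1 * sin (a1 * t) + c2 * sin (a2 * t) + c3 * cos (a1 * t) + c4 * cos (a2 * t).
Proof.
intros H1 H2 Hlh Hw.
assert (Hd : a2^2 - a1^2 <> 0) by nra.
destruct (harmonic_TC (fun t => w2 t + a2^2 * w0 t) (fun t => w3 t + a2^2 * w1 t)
  (fun t => w4 t + a2^2 * w2 t) a1 lo hi) as [P [Q HPQ]]; try lra.
{ intros t Ht. destruct (Hw t Ht) as [D0 [D1 [D2 [D3 E]]]]. split; [|split].
  - apply D_plus; [exact D2 | apply D_scal; exact D0].
  - apply D_plus; [exact D3 | apply D_scal; exact D1].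
  - rewrite E. ring. }
set (d := a2^2 - a1^2) in *.
destruct (harmonic_TC (fun t => w0 t - TC a1 (P/d) (Q/d) t)
   (fun t => w1 t - TC a1 (a1 * (Q/d)) (- (a1 * (P/d))) t)
   (fun t => w2 t - TC a1 (a1 * - (a1 * (P/d))) (- (a1 * (a1 * (Q/d)))) t) a2 lo hi) as [P' [Q' HPQ']]; try lra.
{ intros t Ht. destruct (Hw t Ht) as [D0 [D1 [D2 [D3 E]]]]. split; [|split].
  - apply D_minus; [exact D0 | apply D_TC].
  - apply D_minus; [exact D1 | apply D_TC].
  - specialize (HPQ t Ht). cbv beta in HPQ |- *. unfold TC in *.
    assert (E2 : w2 t = P * cos (a1 * t) + Q * sin (a1 * t) - a2^2 * w0 t) by (rewrite <- HPQ; ring).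
    rewrite E2. unfold d in *. field. auto. }
exists (Q/d), Q', (P/d), P'. intros t Ht. specialize (HPQ' t Ht). cbv beta in HPQ'. unfold TC in *.
replace (w0 t) with ((w0 t - (P / d * cos (a1 * t) + Q / d * sin (a1 * t))) + (P / d * cos (a1 * t) + Q / d * sin (a1 * t))) by ring.
rewrite HPQ'. ring.
Qed.

Lemma rep2 lo hi a w0 w1 w2 w3 w4 : 0 < a -> lo < hi ->
  chain4 lo hi (2 * a^2) (a^4) w0 w1 w2 w3 w4 ->
  exists c1 c2 c3 c4, forall t, lo < t < hi ->
    w0 t = c1 * sin (a * t) + c2 * cos (a * t) + c3 * (t * sin (a * t)) + c4 * (t * cos (a * t)).
Proof.
intros H1 Hlh Hw.
destruct (harmonic_TC (fun t => w2 t + a^2 * w0 t) (fun t => w3 t + a^2 * w1 t)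
  (fun t => w4 t + a^2 * w2 t) a lo hi) as [P [Q HPQ]]; try lra.
{ intros t Ht. destruct (Hw t Ht) as [D0 [D1 [D2 [D3 E]]]]. split; [|split].
  - apply D_plus; [exact D2 | apply D_scal; exact D0].
  - apply D_plus; [exact D3 | apply D_scal; exact D1].
  - rewrite E. ring. }
set (X := - Q / (2 * a)). set (Y := P / (2 * a)).
destruct (harmonic_TC (fun t => w0 t - t * TC a X Y t)
   (fun t => w1 t - (TC a X Y t + t * TC a (a * Y) (- (a * X)) t))
   (fun t => w2 t - (TC a (a * Y) (- (a * X)) t + (TC a (a * Y) (- (a * X)) t + t * TC a (a * - (a * X)) (- (a * (a * Y))) t))) a lo hi) as [P' [Q' HPQ']]; try lra.
{ intros t Ht. destruct (Hw t Ht) as [D0 [D1 [D2 [D3 E]]]]. split; [|split].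
  - apply D_minus; [exact D0 | apply D_tTC].
  - apply D_minus; [exact D1 | apply D_plus; [apply D_TC | apply D_tTC]].
  - specialize (HPQ t Ht). cbv beta in HPQ |- *. unfold TC in *.
    assert (E2 : w2 t = P * cos (a * t) + Q * sin (a * t) - a^2 * w0 t) by (rewrite <- HPQ; ring).
    rewrite E2. unfold X, Y. field. lra. }
exists Q', P', Y, X. intros t Ht. specialize (HPQ' t Ht). cbv beta in HPQ'. unfold TC in *.
replace (w0 t) with ((w0 t - t * (X * cos (a * t) + Y * sin (a * t))) + t * (X * cos (a * t) + Y * sin (a * t))) by ring.
rewrite HPQ'. ring.
Qed.

Lemma rep1 lo hi a b w0 w1 w2 w3 w4 : 0 < a -> 0 < b -> lo < hi ->
  chain4 lo hi (2 * (a^2 - b^2)) ((a^2 + b^2)^2) w0 w1 w2 w3 w4 ->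
  exists c1 c2 c3 c4, forall t, lo < t < hi ->
    w0 t = c1 * (cos (a * t) * sinh (b * t)) + c2 * (sin (a * t) * cosh (b * t))
         + c3 * (sin (a * t) * sinh (b * t)) + c4 * (cos (a * t) * cosh (b * t)).
Proof.
intros Ha Hb Hlh Hw.
set (p := a^2 + b^2).
assert (Hp : 0 < p) by (unfold p; nra).
destruct (damped (fun t => w2 t + 2 * b * w1 t + p * w0 t) (fun t => w3 t + 2 * b * w2 t + p * w1 t)
  (fun t => w4 t + 2 * b * w3 t + p * w2 t) a (- b) lo hi) as [P [Q HPQ]]; try lra.
{ intros t Ht. destruct (Hw t Ht) as [D0 [D1 [D2 [D3 E]]]]. split; [|split].
  - apply D_plus; [apply D_plus; [exact D2 | apply D_scal; exact D1] | apply D_scal; exact D0].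
  - apply D_plus; [apply D_plus; [exact D3 | apply D_scal; exact D2] | apply D_scal; exact D1].
  - rewrite E. unfold p. ring. }
replace (- - b) with b in HPQ by ring.
set (A := (P * b - Q * a) / (4 * b * p)). set (B := (P * a + Q * b) / (4 * b * p)).
destruct (damped (fun t => w0 t - EC b a A B t)
   (fun t => w1 t - EC b a (b * A + a * B) (b * B - a * A) t)
   (fun t => w2 t - EC b a (b * (b * A + a * B) + a * (b * B - a * A)) (b * (b * B - a * A) - a * (b * A + a * B)) t) a b lo hi) as [P' [Q' HPQ']]; try lra.
{ intros t Ht. destruct (Hw t Ht) as [D0 [D1 [D2 [D3 E]]]]. split; [|split].
  - apply D_minus; [exact D0 | apply D_EC].
  - apply D_minus; [exact D1 | apply D_EC].
  - specialize (HPQ t Ht). cbv beta in HPQ |- *. unfold EC, TC in *.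
    assert (E2 : w2 t = exp (b * t) * (P * cos (a * t) + Q * sin (a * t)) - 2 * b * w1 t - p * w0 t) by (rewrite <- HPQ; ring).
    rewrite E2. unfold A, B, p in *. field. lra. }
replace (- b) with (-1 * b) in HPQ' by ring.
exists (A - P'), (B + Q'), (B - Q'), (A + P'). intros t Ht. specialize (HPQ' t Ht). cbv beta in HPQ'. unfold EC, TC in *.
replace (w0 t) with ((w0 t - exp (b * t) * (A * cos (a * t) + B * sin (a * t))) + exp (b * t) * (A * cos (a * t) + B * sin (a * t))) by ring.
rewrite HPQ'. unfold sinh, cosh.
replace (-1 * b * t) with (- (b * t)) by ring.
field.
Qed.

Lemma indep3 lo hi a1 a2 c1 c2 c3 c4 : 0 < a1 -> a1 < a2 -> lo < hi ->
  (forall t, lo < t < hi ->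
    c1 * sin (a1 * t) + c2 * sin (a2 * t) + c3 * cos (a1 * t) + c4 * cos (a2 * t) = 0) ->
  c1 = 0 /\ c2 = 0 /\ c3 = 0 /\ c4 = 0.
Proof.
intros H1 H2 Hlh H.
set (g := fun t => TC a1 c3 c1 t + TC a2 c4 c2 t).
set (g1 := fun t => TC a1 (a1 * c1) (- (a1 * c3)) t + TC a2 (a2 * c2) (- (a2 * c4)) t).
set (g2 := fun t => TC a1 (a1 * - (a1 * c3)) (- (a1 * (a1 * c1))) t + TC a2 (a2 * - (a2 * c4)) (- (a2 * (a2 * c2))) t).
assert (G0 : forall t, lo < t < hi -> g t = 0).
{ intros t Ht. rewrite <- (H t Ht). unfold g, TC. ring. }
assert (G1 := zero_chain g g1 lo hi G0 (fun t _ => D_plus _ _ _ _ _ (D_TC _ _ _ _) (D_TC _ _ _ _))).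
assert (G2 := zero_chain g1 g2 lo hi G1 (fun t _ => D_plus _ _ _ _ _ (D_TC _ _ _ _) (D_TC _ _ _ _))).
assert (Hd : a2^2 - a1^2 <> 0) by nra.
destruct (TC_zero a1 ((a2^2 - a1^2) * c3) ((a2^2 - a1^2) * c1) lo hi) as [Z3 Z1]; try lra.
{ intros t Ht. transitivity (g2 t + a2^2 * g t).
  - unfold g2, g, TC. ring.
  - rewrite G0, G2 by auto. ring. }
apply Rmult_integral in Z3. apply Rmult_integral in Z1.
assert (c3 = 0) by tauto. assert (c1 = 0) by tauto. subst c1 c3.
destruct (TC_zero a2 c4 c2 lo hi) as [Z4 Z2]; try lra.
{ intros t Ht. rewrite <- (G0 t Ht). unfold g, TC. ring. }
all: auto.
Qed.

Lemma indep2 lo hi a c1 c2 c3 c4 : 0 < a -> lo < hi ->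
  (forall t, lo < t < hi ->
    c1 * sin (a * t) + c2 * cos (a * t) + c3 * (t * sin (a * t)) + c4 * (t * cos (a * t)) = 0) ->
  c1 = 0 /\ c2 = 0 /\ c3 = 0 /\ c4 = 0.
Proof.
intros H1 Hlh H.
set (g := fun t => TC a c2 c1 t + t * TC a c4 c3 t).
set (g1 := fun t => TC a (a * c1) (- (a * c2)) t + (TC a c4 c3 t + t * TC a (a * c3) (- (a * c4)) t)).
set (g2 := fun t => TC a (a * - (a * c2)) (- (a * (a * c1))) t + (TC a (a * c3) (- (a * c4)) t +
   (TC a (a * c3) (- (a * c4)) t + t * TC a (a * - (a * c4)) (- (a * (a * c3))) t))).
assert (G0 : forall t, lo < t < hi -> g t = 0).
{ intros t Ht. rewrite <- (H t Ht). unfold g, TC. ring. }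
assert (G1 := zero_chain g g1 lo hi G0 (fun t _ => D_plus _ _ _ _ _ (D_TC _ _ _ _) (D_tTC _ _ _ _))).
assert (G2 := zero_chain g1 g2 lo hi G1 (fun t _ => D_plus _ _ _ _ _ (D_TC _ _ _ _) (D_plus _ _ _ _ _ (D_TC _ _ _ _) (D_tTC _ _ _ _)))).
destruct (TC_zero a (2 * a * c3) (- (2 * a * c4)) lo hi) as [Z3 Z4]; try lra.
{ intros t Ht. transitivity (g2 t + a^2 * g t).
  - unfold g2, g, TC. ring.
  - rewrite G0, G2 by auto. ring. }
assert (c3 = 0) by nra. assert (c4 = 0) by nra. subst c3 c4.
destruct (TC_zero a c2 c1 lo hi) as [Z2 Z1]; try lra.
{ intros t Ht. rewrite <- (G0 t Ht). unfold g, TC. ring. }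
all: auto.
Qed.

Lemma indep1 lo hi a b c1 c2 c3 c4 : 0 < a -> 0 < b -> lo < hi ->
  (forall t, lo < t < hi ->
    c1 * (cos (a * t) * sinh (b * t)) + c2 * (sin (a * t) * cosh (b * t))
    + c3 * (sin (a * t) * sinh (b * t)) + c4 * (cos (a * t) * cosh (b * t)) = 0) ->
  c1 = 0 /\ c2 = 0 /\ c3 = 0 /\ c4 = 0.
Proof.
intros Ha Hb Hlh H.
set (A := (c1 + c4) / 2). set (B := (c2 + c3) / 2). set (C := (c4 - c1) / 2). set (D := (c2 - c3) / 2).
set (p := a^2 + b^2).
set (g := fun t => EC b a A B t + EC (-b) a C D t).
set (g1 := fun t => EC b a (b * A + a * B) (b * B - a * A) t + EC (-b) a (-b * C + a * D) (-b * D - a * C) t).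
set (g2 := fun t => EC b a (b * (b * A + a * B) + a * (b * B - a * A)) (b * (b * B - a * A) - a * (b * A + a * B)) t
   + EC (-b) a (-b * (-b * C + a * D) + a * (-b * D - a * C)) (-b * (-b * D - a * C) - a * (-b * C + a * D)) t).
assert (G0 : forall t, lo < t < hi -> g t = 0).
{ intros t Ht. rewrite <- (H t Ht). unfold g, EC, TC, sinh, cosh, A, B, C, D.
  replace (- b * t) with (- (b * t)) by ring. field. }
assert (G1 := zero_chain g g1 lo hi G0 (fun t _ => D_plus _ _ _ _ _ (D_EC _ _ _ _ _) (D_EC _ _ _ _ _))).
assert (G2 := zero_chain g1 g2 lo hi G1 (fun t _ => D_plus _ _ _ _ _ (D_EC _ _ _ _ _) (D_EC _ _ _ _ _))).
destruct (TC_zero a (4 * b * (b * A + a * B)) (4 * b * (b * B - a * A)) lo hi) as [X1 X2]; try lra.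
{ intros t Ht. transitivity (exp (- (b * t)) * (g2 t + 2 * b * g1 t + p * g t)).
  - transitivity (exp (- (b * t)) * exp (b * t) * TC a (4 * b * (b * A + a * B)) (4 * b * (b * B - a * A)) t).
    + rewrite <- exp_plus. replace (- (b * t) + b * t) with 0 by ring. rewrite exp_0. ring.
    + unfold g2, g1, g, EC, TC, p. ring.
  - rewrite G0, G1, G2 by auto. ring. }
destruct (TC_zero a (4 * b * (b * C - a * D)) (4 * b * (b * D + a * C)) lo hi) as [X3 X4]; try lra.
{ intros t Ht. transitivity (exp (b * t) * (g2 t - 2 * b * g1 t + p * g t)).
  - transitivity (exp (b * t) * exp (- b * t) * TC a (4 * b * (b * C - a * D)) (4 * b * (b * D + a * C)) t).
    + rewrite <- exp_plus. replace (b * t + - b * t) with 0 by ring. rewrite exp_0. ring.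
    + unfold g2, g1, g, EC, TC, p. ring.
  - rewrite G0, G1, G2 by auto. ring. }
assert (HA : A = 0 /\ B = 0).
{ assert (E1 : b * A + a * B = 0) by nra. assert (E2 : b * B - a * A = 0) by nra.
  assert (E3 : (a^2 + b^2) * A = 0) by nra. assert (E4 : (a^2 + b^2) * B = 0) by nra.
  assert (Hq : a^2 + b^2 <> 0) by nra.
  apply Rmult_integral in E3; apply Rmult_integral in E4. tauto. }
assert (HC : C = 0 /\ D = 0).
{ assert (E1 : b * C - a * D = 0) by nra. assert (E2 : b * D + a * C = 0) by nra.
  assert (E3 : (a^2 + b^2) * C = 0) by nra. assert (E4 : (a^2 + b^2) * D = 0) by nra.
  assert (Hq : a^2 + b^2 <> 0) by nra.
  apply Rmult_integral in E3; apply Rmult_integral in E4. tauto. }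
unfold A, B, C, D in *. lra.
Qed.

Lemma params x0 L : 0 < 3 * x0 -> 3 * x0 < L ->
  let cc := x0 / (L + x0) in let a := sqrt cc in
  0 < cc < 1/4 /\ 0 < a < 1/2 /\ a ^ 2 = cc /\ sigma0 x0 L = PI * a /\
  0 < sigma0 x0 L < PI / 2 /\ 0 < sin (sigma0 x0 L) < 1 /\ L < kk x0 L /\
  kk x0 L * sin (sigma0 x0 L) = L.
Proof.
intros H1 H2 cc a.
assert (Hc : 0 < cc < 1/4).
{ unfold cc. split.
  - apply Rdiv_lt_0_compat; lra.
  - apply (Rmult_lt_reg_r (L + x0)). lra. unfold Rdiv. rewrite Rmult_assoc, Rinv_l by lra. lra. }
assert (Ha : 0 < a < 1/2).
{ unfold a. split. apply sqrt_lt_R0; lra.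
  rewrite <- (sqrt_pow2 (1/2)) by lra. apply sqrt_lt_1_alt. lra. }
assert (Ha2 : a ^ 2 = cc). { unfold a. simpl. rewrite Rmult_1_r. apply sqrt_sqrt. lra. }
assert (Hs : sigma0 x0 L = PI * a) by reflexivity.
pose proof PI_RGT_0.
assert (Hsg : 0 < sigma0 x0 L < PI / 2) by (rewrite Hs; split; nra).
assert (Hsin : 0 < sin (sigma0 x0 L) < 1).
{ split. apply sin_gt_0; lra. rewrite <- sin_PI2. apply sin_increasing_1; lra. }
assert (Hk : kk x0 L * sin (sigma0 x0 L) = L).
{ unfold kk. field. lra. }
repeat split; try lra; try tauto.
nra.
Qed.

Definition qf (k L t : R) := sqrt (k^2 - (t - L)^2).

Lemma D_qf k L t : 0 < k^2 - (t - L)^2 -> is_derive (qf k L) t (- (t - L) / qf k L t).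
Proof.
intros H. unfold qf. eapply is_derive_eq.
- apply (is_derive_sqrt (fun t => k^2 - (t - L)^2)); [|exact H]. auto_derive; auto.
- assert (0 < sqrt (k ^ 2 - (t - L) ^ 2)) by (apply sqrt_lt_R0; auto).
  field. lra.
Qed.

Definition rrF a k L t := 2 * a^3 * (qf k L t * qf k L t * qf k L t).
Definition rrF1 a k L t := -6 * a^3 * (t - L) * qf k L t.
Definition rrF2 a k L t := -6 * a^3 * (qf k L t - (t - L)^2 / qf k L t).
Definition qqF a k L t := 2 * a * qf k L t.
Definition qqF1 a k L t := -2 * a * (t - L) / qf k L t.
Definition ppF a k L t := 2 * a / qf k L t.

Lemma qf_pos k L t : 0 < k^2 - (t - L)^2 -> 0 < qf k L t.
Proof. intros; unfold qf; apply sqrt_lt_R0; auto. Qed.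

Lemma D_rrF a k L t : 0 < k^2 - (t - L)^2 -> is_derive (rrF a k L) t (rrF1 a k L t).
Proof.
intros H. pose proof (qf_pos k L t H). unfold rrF, rrF1. eapply is_derive_eq.
- apply D_scal. apply D_mult; [apply D_mult|]; apply D_qf; auto.
- cbv beta. field. lra.
Qed.

Lemma D_rrF1 a k L t : 0 < k^2 - (t - L)^2 -> is_derive (rrF1 a k L) t (rrF2 a k L t).
Proof.
intros H. pose proof (qf_pos k L t H). unfold rrF1, rrF2. eapply is_derive_eq.
- apply D_mult. apply D_scal. apply D_minus. apply D_id. apply D_const. apply D_qf; auto.
- cbv beta. field. lra.
Qed.

Lemma D_qqF a k L t : 0 < k^2 - (t - L)^2 -> is_derive (qqF a k L) t (qqF1 a k L t).
Proof.
intros H. pose proof (qf_pos k L t H). unfold qqF, qqF1. eapply is_derive_eq.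
- apply D_scal. apply D_qf; auto.
- field. lra.
Qed.

Lemma in_dom_Q x0 L t : 0 < 3 * x0 -> 3 * x0 < L -> in_dom L t ->
  0 < kk x0 L ^ 2 - (t - L) ^ 2.
Proof.
intros H1 H2 Ht. destruct (params x0 L H1 H2) as [_ [_ [_ [_ [_ [_ [Hk _]]]]]]].
unfold in_dom in Ht. nra.
Qed.

Lemma coef_eqs x0 L t : 0 < 3 * x0 -> 3 * x0 < L -> in_dom L t ->
  let a := sqrt (x0 / (L + x0)) in let k := kk x0 L in
  rr x0 L t = rrF a k L t /\ qq x0 L t = qqF a k L t /\ pp x0 L t = ppF a k L t.
Proof.
intros H1 H2 Ht a k.
destruct (params x0 L H1 H2) as [Hcc [Ha [Ha2 [Hs [Hsg [Hsin [Hk Hks]]]]]]].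
fold a in Ha, Ha2, Hs.
pose proof (qf_pos k L t (in_dom_Q x0 L t H1 H2 Ht)) as Hq.
pose proof PI_RGT_0.
unfold rr, qq, pp, Hc, rrF, qqF, ppF, lambda0. fold k. rewrite Hs.
change (sqrt (k ^ 2 - (t - L) ^ 2)) with (qf k L t).
repeat split.
- field. split; lra.
- field. split; lra.
- replace (2 - 2 * L / (L + x0)) with (2 * (x0 / (L + x0))) by (field; lra).
  rewrite <- Ha2. field. split; lra.
Qed.

Lemma locally_dom L t : in_dom L t -> locally t (fun y => in_dom L y).
Proof.
intros Ht. apply (locally_open (fun y => 0 < y /\ y < 2 * L)).
- apply open_and; [apply open_gt | apply open_lt].
- auto.
- exact Ht.
Qed.

Lemma HU_of x0 L mu u j s : is_solution x0 L mu u -> in_dom L s -> (j <= 3)%nat ->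
  is_derive (Derive_n u j) s (Derive_n u (S j) s).
Proof.
intros [HC _] Hs Hj. destruct (HC s Hs) as [Hn _].
specialize (Hn (S j)). simpl in Hn. apply Derive_correct. apply Hn. lia.
Qed.

Lemma ode_s x0 L mu u s : 0 < 3 * x0 -> 3 * x0 < L -> is_solution x0 L mu u -> in_dom L s ->
  let a := sqrt (x0 / (L + x0)) in let k := kk x0 L in
  rrF2 a k L s * Derive_n u 2 s + rrF1 a k L s * Derive_n u 3 s
  + (rrF1 a k L s * Derive_n u 3 s + rrF a k L s * Derive_n u 4 s)
  + mu * (qqF1 a k L s * Derive_n u 1 s + qqF a k L s * Derive_n u 2 s)
  + ppF a k L s * u s = 0.
Proof.
intros H1 H2 Hsol Hs a k.
pose proof Hsol as [_ Hode]. specialize (Hode s Hs).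
assert (Inner : forall t, in_dom L t ->
  Derive (fun t' => rr x0 L t' * Derive_n u 2 t') t = rrF1 a k L t * Derive_n u 2 t + rrF a k L t * Derive_n u 3 t).
{ intros t Ht. apply is_derive_unique.
  apply (is_derive_ext_loc (fun t' => rrF a k L t' * Derive_n u 2 t')).
  - apply (filter_imp (fun y => in_dom L y)). 2: apply locally_dom; auto.
    intros y Hy. destruct (coef_eqs x0 L y H1 H2 Hy) as [E _]. rewrite E. reflexivity.
  - eapply is_derive_eq. apply D_mult. apply D_rrF. apply in_dom_Q; auto.
    apply (HU_of x0 L mu u 2 t Hsol Ht). lia. reflexivity. }
assert (Outer : Derive (fun t => Derive (fun t' => rr x0 L t' * Derive_n u 2 t') t) s =
   rrF2 a k L s * Derive_n u 2 s + rrF1 a k L s * Derive_n u 3 s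
  + (rrF1 a k L s * Derive_n u 3 s + rrF a k L s * Derive_n u 4 s)).
{ rewrite (Derive_ext_loc _ (fun t => rrF1 a k L t * Derive_n u 2 t + rrF a k L t * Derive_n u 3 t)).
  - apply is_derive_unique. apply D_plus; apply D_mult.
    + apply D_rrF1. apply in_dom_Q; auto.
    + apply (HU_of x0 L mu u 2 s Hsol Hs). lia.
    + apply D_rrF. apply in_dom_Q; auto.
    + apply (HU_of x0 L mu u 3 s Hsol Hs). lia.
  - apply (filter_imp (fun y => in_dom L y)). 2: apply locally_dom; auto.
    intros y Hy. apply Inner; auto. }
assert (Q : Derive (fun t => qq x0 L t * Derive u t) s =
   qqF1 a k L s * Derive_n u 1 s + qqF a k L s * Derive_n u 2 s).
{ rewrite (Derive_ext_loc _ (fun t => qqF a k L t * Derive_n u 1 t)).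
  - apply is_derive_unique. apply D_mult.
    + apply D_qqF. apply in_dom_Q; auto.
    + apply (HU_of x0 L mu u 1 s Hsol Hs). lia.
  - apply (filter_imp (fun y => in_dom L y)). 2: apply locally_dom; auto.
    intros y Hy. destruct (coef_eqs x0 L y H1 H2 Hy) as [_ [E _]]. rewrite E. reflexivity. }
rewrite Outer, Q in Hode. destruct (coef_eqs x0 L s H1 H2 Hs) as [_ [_ E]].
rewrite E in Hode. exact Hode.
Qed.

Definition Cf (a sg th : R) := cos (a * th - sg).
Definition Sn (a sg th : R) := sin (a * th - sg).
Definition Sf (L k a sg th : R) := L + k * Sn a sg th.

Lemma D_Cf (a sg th : R) : is_derive (Cf a sg) th (- a * Sn a sg th).
Proof. unfold Cf, Sn. auto_derive; auto. unfold Rminus; ring. Qed.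
Lemma D_Sn (a sg th : R) : is_derive (Sn a sg) th (a * Cf a sg th).
Proof. unfold Cf, Sn. auto_derive; auto. unfold Rminus; ring. Qed.
Lemma D_Sf (L k a sg th : R) : is_derive (Sf L k a sg) th (k * (a * Cf a sg th)).
Proof. unfold Sf. eapply is_derive_eq. apply D_plus. apply D_const. apply D_scal. apply D_Sn. ring. Qed.

Lemma D_term (L k a sg : R) (V : R -> R) (v1 : R) (c : R -> R) (dc th : R) :
  is_derive V (Sf L k a sg th) v1 -> is_derive c th dc ->
  is_derive (fun x => V (Sf L k a sg x) * c x) th (v1 * (k * (a * Cf a sg th)) * c th + V (Sf L k a sg th) * dc).
Proof.
intros HV Hc. eapply is_derive_eq.
- apply D_mult; [| exact Hc]. apply (is_derive_comp V (Sf L k a sg)); [exact HV | apply D_Sf].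
- simpl. unfold scal; simpl; unfold mult; simpl. ring.
Qed.

Lemma th_facts x0 L th : 0 < 3 * x0 -> 3 * x0 < L -> 0 < th < 2 * PI ->
  let a := sqrt (x0 / (L + x0)) in let k := kk x0 L in let sg := sigma0 x0 L in
  in_dom L (Sf L k a sg th) /\ 0 < Cf a sg th /\ qf k L (Sf L k a sg th) = k * Cf a sg th /\
  - sg < a * th - sg < sg.
Proof.
intros H1 H2 Hth a k sg.
destruct (params x0 L H1 H2) as [Hcc [Ha [Ha2 [Hs [Hsg [Hsin [Hk Hks]]]]]]].
fold a k sg in Ha, Ha2, Hs, Hsg, Hsin, Hk, Hks.
pose proof PI_RGT_0.
assert (Hph : - sg < a * th - sg < sg) by (rewrite Hs; nra).
assert (HC : 0 < Cf a sg th) by (unfold Cf; apply cos_gt_0; lra).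
assert (HS : - sin sg < Sn a sg th < sin sg).
{ unfold Sn. rewrite <- sin_neg. split; apply sin_increasing_1; lra. }
split; [|split; [exact HC | split; [| exact Hph]]].
- unfold in_dom, Sf. split; nra.
- unfold qf, Sf. replace (k ^ 2 - (L + k * Sn a sg th - L) ^ 2) with ((k * Cf a sg th) ^ 2).
  + apply sqrt_pow2. nra.
  + unfold Cf, Sn. pose proof (sin2_cos2 (a * th - sg)) as E. unfold Rsqr in E.
    transitivity (k^2 * (sin (a * th - sg) * sin (a * th - sg) + cos (a * th - sg) * cos (a * th - sg)) - (k * sin (a * th - sg))^2).
    * ring.
    * rewrite E. ring.
Qed.

Lemma transfer x0 L mu u : 0 < 3 * x0 -> 3 * x0 < L -> is_solution x0 L mu u ->
  let a := sqrt (x0 / (L + x0)) in let k := kk x0 L in let sg := sigma0 x0 L in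
  let cc := x0 / (L + x0) in
  exists w1 w2 w3 w4, chain4 0 (2 * PI) (mu + cc) cc (fun th => u (Sf L k a sg th)) w1 w2 w3 w4.
Proof.
intros H1 H2 Hsol a k sg cc.
destruct (params x0 L H1 H2) as [Hcc [Ha [Ha2 [Hs [Hsg [Hsin [Hk Hks]]]]]]].
fold cc a k sg in Hcc, Ha, Ha2, Hs, Hsg, Hsin, Hk, Hks.
set (S := Sf L k a sg).
set (C := Cf a sg). set (N := Sn a sg).
set (w2 := fun th => Derive_n u 2 (S th) * (k * a * C th * (k * a * C th)) + Derive_n u 1 (S th) * (- (k * a ^ 2) * N th)).
exists (fun th => Derive_n u 1 (S th) * (k * a * C th)), w2,
  (fun th => Derive_n u 3 (S th) * (k * a * C th * (k * a * C th) * (k * a * C th))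
     + Derive_n u 2 (S th) * (3 * (k * a * C th) * (- (k * a ^ 2) * N th))
     + Derive_n u 1 (S th) * (- (k * a ^ 3) * C th)),
  (fun th => - (mu + cc) * w2 th - cc * u (S th)).
intros th Hth.
destruct (th_facts x0 L th H1 H2 Hth) as [Hdom [HC [Hq _]]]. fold a k sg S C in Hdom, HC, Hq.
assert (HU : forall j, (j <= 3)%nat -> is_derive (Derive_n u j) (S th) (Derive_n u (Datatypes.S j) (S th))).
{ intros j Hj. apply (HU_of x0 L mu u j); auto. }
assert (DC : forall c, is_derive (fun x => c * C x) th (c * (- a * N th))).
{ intros c. apply D_scal. apply D_Cf. }
assert (DN : forall c, is_derive (fun x => c * N x) th (c * (a * C th))).
{ intros c. apply D_scal. apply D_Sn. }
split; [|split; [|split; [|split]]].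
- eapply is_derive_eq.
  + apply (is_derive_comp u S). exact (HU 0%nat ltac:(lia)). apply D_Sf.
  + simpl. unfold scal; simpl; unfold mult; simpl. fold C. ring.
- eapply is_derive_eq.
  + apply (D_term L k a sg (Derive_n u 1)). exact (HU 1%nat ltac:(lia)). apply DC.
  + fold S C. unfold w2. ring.
- eapply is_derive_eq.
  + apply D_plus; (apply (D_term L k a sg); [apply HU; lia|]).
    * apply D_mult; apply DC.
    * apply DN.
  + cbv beta. unfold S, C, N. ring.
- eapply is_derive_eq.
  + apply D_plus. apply D_plus.
    * apply (D_term L k a sg (Derive_n u 3)). apply HU; lia. apply D_mult; [apply D_mult|]; apply DC.
    * apply (D_term L k a sg (Derive_n u 2)). apply HU; lia. apply D_mult; [apply D_scal; apply DC | apply DN].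
    * apply (D_term L k a sg (Derive_n u 1)). apply HU; lia. apply DC.
  + pose proof (ode_s x0 L mu u (S th) H1 H2 Hsol Hdom) as Hode. cbv zeta in Hode. fold a k in Hode.
    unfold rrF2, rrF1, rrF, qqF1, qqF, ppF in Hode. rewrite Hq in Hode.
    assert (HSL : S th - L = k * N th) by (unfold S, Sf; fold N; ring).
    rewrite HSL in Hode.
    cbv beta. unfold w2. rewrite <- Ha2.
    unfold S, C, N in *.
    change (Derive_n u 4 (Sf L k a sg th)) with (Derive_n u (Datatypes.S 3) (Sf L k a sg th)) in Hode.
    generalize dependent Hode.
    generalize (u (Sf L k a sg th)) (Derive_n u 1 (Sf L k a sg th)) (Derive_n u 2 (Sf L k a sg th))
      (Derive_n u 3 (Sf L k a sg th)) (Derive_n u (Datatypes.S 3) (Sf L k a sg th)).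
    intros U0 U1 U2 U3 U4 Hode.
    change (sqrt cc) with a.
    assert (HCk : k * Cf a sg th <> 0) by (apply Rgt_not_eq; apply Rmult_lt_0_compat; lra).
    set (c0 := Cf a sg th) in *. set (s0 := Sn a sg th) in *.
    apply Rminus_diag_uniq. rewrite <- (Rmult_0_r (k * a * c0 / 2)). rewrite <- Hode.
    field. split; [|lra]. intro Hc0. apply HCk. rewrite Hc0. ring.
- reflexivity.
Qed.

Lemma theta_S x0 L th : 0 < 3 * x0 -> 3 * x0 < L -> 0 < th < 2 * PI ->
  theta x0 L (Sf L (kk x0 L) (sqrt (x0 / (L + x0))) (sigma0 x0 L) th) = th.
Proof.
intros H1 H2 Hth.
destruct (th_facts x0 L th H1 H2 Hth) as [_ [_ [_ Hph]]].
destruct (params x0 L H1 H2) as [Hcc [Ha [Ha2 [Hs [Hsg [Hsin [Hk Hks]]]]]]].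
pose proof PI_RGT_0.
unfold theta, Sf, Sn.
replace ((L + kk x0 L * sin (sqrt (x0 / (L + x0)) * th - sigma0 x0 L) - L) / kk x0 L)
  with (sin (sqrt (x0 / (L + x0)) * th - sigma0 x0 L)) by (field; lra).
rewrite asin_sin by lra.
rewrite Hs. field. split; lra.
Qed.

Lemma S_theta x0 L s : 0 < 3 * x0 -> 3 * x0 < L -> in_dom L s ->
  Sf L (kk x0 L) (sqrt (x0 / (L + x0))) (sigma0 x0 L) (theta x0 L s) = s /\
  0 < theta x0 L s < 2 * PI.
Proof.
intros H1 H2 Hs0.
destruct (params x0 L H1 H2) as [Hcc [Ha [Ha2 [Hs [Hsg [Hsin [Hk Hks]]]]]]].
pose proof PI_RGT_0.
set (a := sqrt (x0 / (L + x0))) in *. set (k := kk x0 L) in *. set (sg := sigma0 x0 L) in *.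
set (x := (s - L) / k).
unfold in_dom in Hs0.
assert (Hx : - sin sg < x < sin sg).
{ unfold x. split.
  - apply (Rmult_lt_reg_r k). lra. unfold Rdiv. rewrite Rmult_assoc, Rinv_l by lra. nra.
  - apply (Rmult_lt_reg_r k). lra. unfold Rdiv. rewrite Rmult_assoc, Rinv_l by lra. nra. }
pose proof (asin_bound x) as Hb.
assert (Hsa : sin (asin x) = x) by (apply sin_asin; lra).
assert (Hph : - sg < asin x < sg).
{ split.
  - apply sin_increasing_0; try lra. rewrite sin_neg, Hsa. lra.
  - apply sin_increasing_0; lra. }
assert (Ht : a * theta x0 L s - sg = asin x).
{ unfold theta. fold sg k. fold x. rewrite Hs. field. lra. }
split.
- unfold Sf, Sn. rewrite Ht, Hsa. unfold x. field. lra.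
- unfold theta. fold sg k x. rewrite Hs in *.
  split.
  + apply Rmult_lt_0_compat. lra.
    assert (-1 < / (PI * a) * asin x). { apply (Rmult_lt_reg_l (PI * a)). nra.
      rewrite <- Rmult_assoc, Rinv_r by nra. lra. } lra.
  + assert (/ (PI * a) * asin x < 1). { apply (Rmult_lt_reg_l (PI * a)). nra.
      rewrite <- Rmult_assoc, Rinv_r by nra. lra. } nra.
Qed.

Lemma basis_from x0 L mu (f1 f2 f3 f4 : R -> R) : 0 < 3 * x0 -> 3 * x0 < L ->
  (forall w0 w1 w2 w3 w4, chain4 0 (2 * PI) (mu + x0 / (L + x0)) (x0 / (L + x0)) w0 w1 w2 w3 w4 ->
     exists c1 c2 c3 c4, forall th, 0 < th < 2 * PI ->
       w0 th = c1 * f1 th + c2 * f2 th + c3 * f3 th + c4 * f4 th) ->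
  (forall c1 c2 c3 c4, (forall th, 0 < th < 2 * PI ->
       c1 * f1 th + c2 * f2 th + c3 * f3 th + c4 * f4 th = 0) ->
     c1 = 0 /\ c2 = 0 /\ c3 = 0 /\ c4 = 0) ->
  basis_of_solutions x0 L mu f1 f2 f3 f4.
Proof.
intros H1 H2 Hrep Hind. split.
- intros u Hsol.
  destruct (transfer x0 L mu u H1 H2 Hsol) as [w1 [w2 [w3 [w4 Hch]]]].
  destruct (Hrep _ _ _ _ _ Hch) as [c1 [c2 [c3 [c4 Hc]]]].
  exists c1, c2, c3, c4. intros s Hs.
  destruct (S_theta x0 L s H1 H2 Hs) as [E Ht].
  rewrite <- (Hc _ Ht). rewrite E. reflexivity.
- intros c1 c2 c3 c4 H. apply Hind. intros th Hth.
  destruct (th_facts x0 L th H1 H2 Hth) as [Hdom _].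
  specialize (H _ Hdom). rewrite theta_S in H by auto. exact H.
Qed.

Lemma sqh X : 0 <= X -> (/ 2 * sqrt X) ^ 2 = X / 4.
Proof. intros H. simpl. rewrite Rmult_1_r.
replace (/ 2 * sqrt X * (/ 2 * sqrt X)) with (sqrt X * sqrt X / 4) by field.
rewrite sqrt_sqrt; auto. Qed.

Lemma sqh_pos X : 0 < X -> 0 < / 2 * sqrt X.
Proof. intros H. apply Rmult_lt_0_compat. lra. apply sqrt_lt_R0; auto. Qed.

Theorem mainTheorem16 (x0 L mu : R) :
  0 < 3 * x0 -> 3 * x0 < L -> 0 < mu ->
  (mu < mu0 x0 L ->
     let a := alpha x0 L mu in let b := beta x0 L mu in
     basis_of_solutions x0 L mu
       (fun t => cos (a * t) * sinh (b * t))
       (fun t => sin (a * t) * cosh (b * t))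
       (fun t => sin (a * t) * sinh (b * t))
       (fun t => cos (a * t) * cosh (b * t)))
  /\
  (mu = mu0 x0 L ->
     let a := alpha x0 L mu in
     basis_of_solutions x0 L mu
       (fun t => sin (a * t))
       (fun t => cos (a * t))
       (fun t => t * sin (a * t))
       (fun t => t * cos (a * t)))
  /\
  (mu0 x0 L < mu ->
     let a := alpha x0 L mu in let g := gamma x0 L mu in
     basis_of_solutions x0 L mu
       (fun t => sin ((a - g) * t))
       (fun t => sin ((a + g) * t))
       (fun t => cos ((a - g) * t))
       (fun t => cos ((a + g) * t))).
Proof.
intros H1 H2 Hmu.
destruct (params x0 L H1 H2) as [Hcc [Ha [Ha2 _]]].
set (cc := x0 / (L + x0)) in *. set (q := sqrt cc) in *.
pose proof PI_RGT_0 as HPI.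
assert (Hlh : 0 < 2 * PI) by lra.
split; [|split].
- intros Hlt a b.
  unfold mu0 in Hlt. fold cc q in Hlt.
  assert (Ea : a ^ 2 = (mu + cc + 2 * q) / 4) by (apply sqh; fold cc q; lra).
  assert (Eb : b ^ 2 = (- mu - cc + 2 * q) / 4) by (apply sqh; fold cc q; lra).
  assert (Pa : 0 < a) by (apply sqh_pos; fold cc q; lra).
  assert (Pb : 0 < b) by (apply sqh_pos; fold cc q; lra).
  apply basis_from; auto.
  + intros w0 w1 w2 w3 w4 Hch. fold cc in Hch.
    replace (mu + cc) with (2 * (a^2 - b^2)) in Hch by lra.
    assert (Ec : cc = (a^2 + b^2)^2) by (rewrite Ea, Eb, <- Ha2; field). rewrite Ec in Hch.
    exact (rep1 0 (2 * PI) a b w0 w1 w2 w3 w4 Pa Pb Hlh Hch).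
  + intros c1 c2 c3 c4 H. exact (indep1 0 (2 * PI) a b c1 c2 c3 c4 Pa Pb Hlh H).
- intros Heq a.
  unfold mu0 in Heq. fold cc q in Heq.
  assert (Ea : a ^ 2 = q) by (unfold a, alpha; rewrite sqh; fold cc q; lra).
  assert (Pa : 0 < a) by (apply sqh_pos; fold cc q; lra).
  apply basis_from; auto.
  + intros w0 w1 w2 w3 w4 Hch. fold cc in Hch.
    replace (mu + cc) with (2 * a^2) in Hch by lra.
    assert (Ec : cc = a^4) by (replace (a^4) with ((a^2)^2) by ring; rewrite Ea; lra). rewrite Ec in Hch.
    exact (rep2 0 (2 * PI) a w0 w1 w2 w3 w4 Pa Hlh Hch).
  + intros c1 c2 c3 c4 H. exact (indep2 0 (2 * PI) a c1 c2 c3 c4 Pa Hlh H).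
- intros Hgt a g.
  unfold mu0 in Hgt. fold cc q in Hgt.
  assert (Ea : a ^ 2 = (mu + cc + 2 * q) / 4) by (apply sqh; fold cc q; lra).
  assert (Eg : g ^ 2 = (mu + cc - 2 * q) / 4) by (apply sqh; fold cc q; lra).
  assert (Pa : 0 < a) by (apply sqh_pos; fold cc q; lra).
  assert (Pg : 0 < g) by (apply sqh_pos; fold cc q; lra).
  assert (Hag : g < a) by nra.
  assert (P1 : 0 < a - g) by lra.
  assert (P2 : a - g < a + g) by lra.
  apply basis_from; auto.
  + intros w0 w1 w2 w3 w4 Hch. fold cc in Hch.
    replace (mu + cc) with ((a - g)^2 + (a + g)^2) in Hch by nra.
    assert (Ec : cc = (a - g)^2 * (a + g)^2).
    { replace ((a - g)^2 * (a + g)^2) with ((a^2 - g^2)^2) by ring. rewrite Ea, Eg, <- Ha2. field. }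
    rewrite Ec in Hch.
    exact (rep3 0 (2 * PI) (a - g) (a + g) w0 w1 w2 w3 w4 P1 P2 Hlh Hch).
  + intros c1 c2 c3 c4 H. exact (indep3 0 (2 * PI) (a - g) (a + g) c1 c2 c3 c4 P1 P2 Hlh H).
Qed.
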